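(* Let $C>0$, $\epsilon\in(0,1)$ and set $K:=\frac{C\cos\left(\epsilon\frac{\pi}{2}\right)}{3^{\epsilon/2}}$. There exists $k\in(0,1)$ depending on $C$ and $\epsilon$ such that $$k\exp\left(K|z|^\epsilon\right)\le\left|e^{z}\right|\le\exp(|z|)$$ for all $z\in U_C^\epsilon$.
   Context: $H(0)=\{z\in\mathbb{C}:\operatorname{Re}z>0\}$, and $U_C^\epsilon:=\phi_C^\epsilon(H(0))$ where $\phi_C^\epsilon(z)=z+C(1+z)^\epsilon$ with the principal branch of the power function. *)

(* Defs.v *)
From Stdlib Require Import Reals.
From Coquelicot Require Import Coquelicot.
Open Scope R_scope.

Definition Cexp (z : C) : C :=
  (exp (Re z) * cos (Im z), exp (Re z) * sin (Im z)).

(* principal argument, values in (-PI, PI] *)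
Definition Carg (z : C) : R :=
  let x := Re z in let y := Im z in
  if Rlt_dec 0 x then atan (y / x)
  else if Rlt_dec x 0 then
         (if Rle_dec 0 y then atan (y / x) + PI else atan (y / x) - PI)
  else if Rlt_dec 0 y then PI / 2
  else if Rlt_dec y 0 then - (PI / 2) else 0.

(* principal logarithm (for z <> 0) *)
Definition Clog (z : C) : C := (ln (Cmod z), Carg z).

Definition Cpow (w : C) (a : R) : C :=
  if Ceq_dec w 0 then 0 else Cexp (RtoC a * Clog w).

Definition H0 (z : C) : Prop := 0 < Re z.

Definition phi (Cc eps : R) (z : C) : C := z + RtoC Cc * Cpow (1 + z) eps.

Definition U (Cc eps : R) (w : C) : Prop := exists z, H0 z /\ w = phi Cc eps z.

(* Main.v *)
Require Import Defs.
From Stdlib Require Import Reals Lra.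
From Coquelicot Require Import Coquelicot.
Open Scope R_scope.

Lemma cmod_cexp w : Cmod (Cexp w) = exp (Re w).
Proof.
  unfold Cmod, Cexp; cbn [fst snd].
  replace ((exp (Re w) * cos (Im w)) ^ 2 + (exp (Re w) * sin (Im w)) ^ 2)
    with (exp (Re w) ^ 2).
  - apply sqrt_pow2; left; apply exp_pos.
  - pose proof (sin2_cos2 (Im w)) as H; unfold Rsqr in H; transitivity (exp (Re w)^2 * (sin (Im w) * sin (Im w) + cos (Im w) * cos (Im w))); [rewrite H; ring | ring].
Qed.

Lemma re_cexp w : Re (Cexp w) = exp (Re w) * cos (Im w).
Proof. reflexivity. Qed.

Lemma basics z : H0 z ->
  1 < Cmod (1 + z) /\ Cmod z <= Cmod (1 + z).
Proof.
  unfold H0; intros Hz; destruct z as [a b]; simpl in Hz.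
  unfold Cmod; simpl.
  split.
  - rewrite <- sqrt_1 at 1. apply sqrt_lt_1_alt. split; [lra|]. nra.
  - apply sqrt_le_1_alt. nra.
Qed.

Lemma cpow_facts eps z : 0 < eps < 1 -> H0 z ->
  Cmod (Defs.Cpow (1 + z) eps) = Rpower (Cmod (1 + z)) eps /\
  cos (eps * (PI / 2)) * Rpower (Cmod (1 + z)) eps <= Re (Defs.Cpow (1 + z) eps).
Proof.
  intros He Hz.
  assert (Hx : 0 < Re (1 + z)) by (unfold H0 in Hz; destruct z; simpl in *; lra).
  assert (Hne : (1 + z)%C <> 0).
  { intro E. rewrite E in Hx. simpl in Hx. lra. }
  unfold Defs.Cpow. destruct (Ceq_dec (1 + z) 0) as [E|_]; [contradiction|].
  rewrite cmod_cexp, re_cexp.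
  unfold Clog, Carg.
  destruct (Rlt_dec 0 (Re (1 + z))) as [_|N]; [|lra].
  set (th := atan (Im (1 + z) / Re (1 + z))).
  set (t := Cmod (1 + z)).
  assert (Hre : Re (RtoC eps * (ln t, th)) = eps * ln t) by (simpl; ring).
  assert (Him : Im (RtoC eps * (ln t, th)) = eps * th) by (simpl; ring).
  rewrite Hre, Him.
  split; [reflexivity|].
  fold (Rpower t eps).
  assert (Hp : 0 < Rpower t eps) by (unfold Rpower; apply exp_pos).
  rewrite (Rmult_comm (Rpower t eps)).
  apply Rmult_le_compat_r; [lra|].
  pose proof (atan_bound (Im (1 + z) / Re (1 + z))) as Hb. fold th in Hb.
  pose proof PI_RGT_0.
  assert (Habs : Rabs (eps * th) <= eps * (PI / 2)).
  { rewrite Rabs_mult, Rabs_pos_eq by lra.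
    apply Rmult_le_compat_l; [lra|]. apply Rabs_le; lra. }
  replace (cos (eps * th)) with (cos (Rabs (eps * th))) by (unfold Rabs; destruct (Rcase_abs (eps * th)); [apply cos_neg|reflexivity]).
  apply cos_decr_1; try lra.
  - apply Rabs_pos.
  - assert (eps * (PI / 2) <= PI / 2) by nra. lra.
  - nra.
  - nra.
Qed.

Lemma exp_le_mono x y : x <= y -> exp x <= exp y.
Proof. intros [H|H]; [left; apply exp_increasing; auto| rewrite H; lra]. Qed.

Lemma Rpower_pos x y : 0 < Rpower x y.
Proof. unfold Rpower; apply exp_pos. Qed.

Theorem lemma3p3 (Cc eps : R) (hC : 0 < Cc) (heps : 0 < eps < 1) :
  let K := Cc * cos (eps * (PI / 2)) / Rpower 3 (eps / 2) in
  exists k : R, 0 < k < 1 /\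
    forall z : C, U Cc eps z ->
      k * exp (K * Rpower (Cmod z) eps) <= Cmod (Cexp z) /\
      Cmod (Cexp z) <= exp (Cmod z).
Proof.
  intros K.
  pose proof PI_RGT_0 as HPI.
  set (c := cos (eps * (PI / 2))).
  assert (Hc : 0 < c).
  { unfold c; apply cos_gt_0; nra. }
  set (a := Rpower 3 (eps / 2)).
  set (b := Rpower 3 (1 / 2)).
  assert (Hb : 1 < b).
  { unfold b; apply Rle_lt_trans with (Rpower 3 0); [rewrite Rpower_O by lra; lra | apply Rpower_lt; lra]. }
  assert (Hba : Rpower b eps = a).
  { unfold b, a; rewrite Rpower_mult. f_equal; field. }
  assert (Ha : 0 < a) by apply Rpower_pos.
  assert (HK : 0 < K) by (unfold K; fold c a; apply Rdiv_lt_0_compat; nra).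
  assert (HKa : K * a = Cc * c) by (unfold K; fold c a; field; lra).
  set (D := Cc / (b - 1)).
  assert (HD : 0 < D) by (unfold D; apply Rdiv_lt_0_compat; lra).
  set (T := Rpower D (1 / (1 - eps))).
  set (W := (1 + Cc) * T).
  assert (HW : 0 < W) by (unfold W, T; pose proof (Rpower_pos D (1 / (1 - eps))); nra).
  set (M := K * Rpower W eps).
  assert (HM : 0 <= M) by (unfold M; pose proof (Rpower_pos W eps); nra).
  exists (exp (- M - 1)).
  split.
  { split; [apply exp_pos|]. apply Rlt_le_trans with (exp 0); [apply exp_increasing; lra | rewrite exp_0; lra]. }
  intros w [z0 [Hz Hw]].
  rewrite cmod_cexp.
  destruct (basics z0 Hz) as [Ht1 Hzt].
  destruct (cpow_facts eps z0 heps Hz) as [HPm HPr].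
  set (t := Cmod (1 + z0)) in *.
  set (P := Defs.Cpow (1 + z0) eps) in *.
  assert (Hre : Re w = Re z0 + Cc * Re P).
  { rewrite Hw; unfold phi; fold P; simpl; unfold Re; ring. }
  assert (Hmod : Cmod w <= t + Cc * Rpower t eps).
  { rewrite Hw; unfold phi; fold P.
    eapply Rle_trans; [apply Cmod_triangle|].
    rewrite Cmod_mult, Cmod_R, Rabs_pos_eq, HPm by lra. lra. }
  assert (Hz0 : 0 < Re z0) by exact Hz.
  assert (Htp : 0 < Rpower t eps) by apply Rpower_pos.
  assert (Hrew : Cc * c * Rpower t eps < Re w).
  { rewrite Hre. fold c in HPr. pose proof (Rmult_le_compat_l Cc _ _ (Rlt_le _ _ hC) HPr). nra. }
  assert (Hwpos : 0 < Cmod w).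
  { pose proof (re_le_Cmod w). pose proof (Rle_abs (Re w)). assert (0 < Cc * c * Rpower t eps) by (apply Rmult_lt_0_compat; [apply Rmult_lt_0_compat|]; lra). lra. }
  split.
  2:{ apply exp_le_mono. eapply Rle_trans; [apply Rle_abs|apply re_le_Cmod]. }
  rewrite <- exp_plus. apply exp_le_mono.
  enough (K * Rpower (Cmod w) eps <= M + Cc * c * Rpower t eps) by lra.
  destruct (Rle_or_lt (Cmod w) (b * t)) as [Hcase|Hcase].
  - assert (Rpower (Cmod w) eps <= Rpower (b * t) eps)
      by (apply Rle_Rpower_l; lra).
    rewrite <- Rpower_mult_distr, Hba in H by lra.
    rewrite <- HKa. nra.
  - assert (Hlt : (b - 1) * t < Cc * Rpower t eps) by lra.
    assert (Hsplit : t = Rpower t (1 - eps) * Rpower t eps).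
    { rewrite <- Rpower_plus. replace (1 - eps + eps) with 1 by ring.
      rewrite Rpower_1; lra. }
    assert (Hq : Rpower t (1 - eps) < D).
    { unfold D. apply Rmult_lt_reg_r with (b - 1); [lra|].
      field_simplify; [|lra].
      apply Rmult_lt_reg_r with (Rpower t eps); [lra|].
      replace ((Rpower t (1-eps)*b - Rpower t (1-eps)) * Rpower t eps) with ((b-1) * (Rpower t (1-eps) * Rpower t eps)) by ring. rewrite <- Hsplit. lra. }
    assert (HtT : t < T).
    { unfold T.
      replace t with (Rpower (Rpower t (1 - eps)) (1 / (1 - eps))) at 1.
      - apply Rlt_Rpower_l; [apply Rdiv_lt_0_compat; lra|].
        split; [apply Rpower_pos|exact Hq].
      - rewrite Rpower_mult. replace ((1 - eps) * (1 / (1 - eps))) with 1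
          by (field; lra). apply Rpower_1; lra. }
    assert (Hte : Rpower t eps <= t).
    { rewrite <- (Rpower_1 t) at 2 by lra. apply Rle_Rpower; lra. }
    assert (HwW : Cmod w <= W) by (unfold W; nra).
    assert (Rpower (Cmod w) eps <= Rpower W eps)
      by (apply Rle_Rpower_l; lra).
    unfold M. pose proof (Rmult_le_compat_l K _ _ (Rlt_le _ _ HK) H). assert (0 < Cc * c * Rpower t eps) by (apply Rmult_lt_0_compat; [apply Rmult_lt_0_compat|]; lra). lra.
Qed.
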